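(* Suppose $(B,b)$ is a type (2) Whitehead automorphism and $a\in L$ satisfies $a\ge b$ and $a,a^{-1}\notin B$. Suppose $[u]$ is an element or a conjugacy class of $A_\Gamma$ with $\bar b\notin\mathrm{supp}[u]$, and $v$ is a graphically reduced word (respectively cyclic word) representing $(B,b)([u])$. Let $v'$ be obtained from $v$ by replacing every occurrence of $b$ by $a$ and every occurrence of $b^{-1}$ by $a^{-1}$. Then $v'$ represents $((B\setminus\{b\})\cup\{a\},a)([u])$.
   Context: $\Gamma$ is a finite simplicial graph with vertex set $X$, $A_\Gamma$ its right-angled Artin group, $L=X\cup X^{-1}$, $\bar u$ the vertex of a letter $u$, $\mathrm{lk}(v)$ neighbours, $\mathrm{st}(v)=\mathrm{lk}(v)\cup\{v\}$; domination $v\ge w$ iff $\mathrm{lk}(w)\subset\mathrm{st}(v)$, extended to letters via vertices. For $a\in A\subset L$ with $a^{-1}\notin A$, $(A,a)$ denotes the map fixing $a$ and sending $x\in L\setminus\{a^{\pm1}\}$ to $a^{-\epsilon}xa^{\delta}$ where $\delta=1$ if $x\in A$ (else $0$) and $\epsilon=1$ if $x^{-1}\in A$ (else $0$); a type (2) Whitehead automorphism is such a map that is an automorphism of $A_\Gamma$. Under the hypotheses of the claim, $((B\setminus\{b\})\cup\{a\},a)$ is also a well-defined automorphism. A word (cyclic word) is graphically reduced if it has minimal length among words representing the same element (conjugacy class). The support of an element/conjugacy class is the set of vertices occurring in a graphically reduced representative. *)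

(* Defs.v *)
From mathcomp Require Import all_boot.
Set Implicit Arguments. Unset Strict Implicit. Unset Printing Implicit Defensive.

Section RAAG.
Variables (V : finType) (adj : rel V).

(* letters L = X u X^{-1}: (x, false) = x, (x, true) = x^{-1} *)
Definition letter := (V * bool)%type.
Definition linv (x : letter) : letter := (x.1, ~~ x.2).
Definition word := seq letter.
Definition winv (w : word) : word := rev (map linv w).

(* equality in A_Gamma: congruence generated by free cancellation and
   commutation of letters with adjacent vertices *)
Inductive wequiv : word -> word -> Prop :=
| we_refl w : wequiv w w
| we_sym w1 w2 : wequiv w1 w2 -> wequiv w2 w1
| we_trans w1 w2 w3 : wequiv w1 w2 -> wequiv w2 w3 -> wequiv w1 w3
| we_cancel p s x : wequiv (p ++ x :: linv x :: s) (p ++ s)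
| we_comm p s x y : adj x.1 y.1 -> wequiv (p ++ x :: y :: s) (p ++ y :: x :: s).

Definition wconj (w1 w2 : word) : Prop :=
  exists g : word, wequiv (g ++ w1 ++ winv g) w2.

Definition greduced (w : word) : Prop :=
  forall w', wequiv w' w -> size w <= size w'.
Definition cgreduced (w : word) : Prop :=
  forall w', wconj w' w -> size w <= size w'.

Definition occurs (x : V) (w : word) : bool := x \in map fst w.

Definition supp_el (w : word) (x : V) : Prop :=
  exists w', [/\ wequiv w' w, greduced w' & occurs x w'].
Definition supp_cl (w : word) (x : V) : Prop :=
  exists w', [/\ wconj w' w, cgreduced w' & occurs x w'].

Definition wext (f : letter -> word) (w : word) : word := flatten (map f w).

Definition respects (f : letter -> word) : Prop :=
  forall w1 w2, wequiv w1 w2 -> wequiv (wext f w1) (wext f w2).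

Definition is_aut (f : letter -> word) : Prop :=
  respects f /\ exists g : letter -> word, respects g /\
    forall x, wequiv (wext g (f x)) [:: x] /\ wequiv (wext f (g x)) [:: x].

Definition whmap (A : {set letter}) (a : letter) (x : letter) : word :=
  if (x == a) || (x == linv a) then [:: x]
  else (if linv x \in A then [:: linv a] else [::]) ++
       x :: (if x \in A then [:: a] else [::]).

Definition whitehead2 (A : {set letter}) (a : letter) : Prop :=
  [/\ a \in A, linv a \notin A & is_aut (whmap A a)].

(* domination v >= w iff lk(w) subset st(v) *)
Definition dominates (v w : V) : Prop :=
  forall z, adj w z -> adj v z || (z == v).

Definition replace_letter (b a : letter) (w : word) : word :=
  map (fun x => if x == b then a else if x == linv b then linv a else x) w.

End RAAG.

(* Main.v *)
Require Import Defs.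
From Stdlib Require Import Classical.
From mathcomp Require Import all_boot.
Set Implicit Arguments. Unset Strict Implicit. Unset Printing Implicit Defensive.

Section Gen.
Variables (V : finType) (adj : rel V).
Local Notation weq := (wequiv adj).

Lemma linvK : involutive (@linv V).
Proof. by case=> v c; rewrite /linv /= negbK. Qed.

Lemma same_vertex (x y : letter V) : x.1 = y.1 -> y = x \/ y = linv x.
Proof.
case: x y => [v c] [w d] /= ->; rewrite /linv /=.
by case: c; case: d; auto.
Qed.

Lemma linv_eq2 (x c : letter V) :
  (linv x == c) || (linv x == linv c) = (x == c) || (x == linv c).
Proof.
rewrite orbC; congr orb.
  by apply/eqP/eqP => [/(can_inj linvK)|->].
by apply/eqP/eqP => [<-|->]; rewrite linvK.
Qed.

Lemma weq_cat p s w1 w2 : weq w1 w2 -> weq (p ++ w1 ++ s) (p ++ w2 ++ s).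
Proof.
elim=> {w1 w2} [w|w1 w2 _ IH|w1 w2 w3 _ IH1 _ IH2|p' s' x|p' s' x y Hxy].
- exact: we_refl.
- exact: we_sym.
- exact: we_trans IH1 IH2.
- move: (we_cancel adj (p ++ p') (s' ++ s) x); by rewrite -!catA.
- move: (we_comm (p ++ p') (s' ++ s) Hxy); by rewrite -!catA.
Qed.

Lemma winv_cat (w1 w2 : word V) : winv (w1 ++ w2) = winv w2 ++ winv w1.
Proof. by rewrite /winv map_cat rev_cat. Qed.

Lemma winvK (w : word V) : winv (winv w) = w.
Proof.
rewrite /winv map_rev revK -map_comp (@eq_map _ _ _ id) ?map_id //.
by move=> x /=; rewrite linvK.
Qed.

Lemma weq_winvr (w : word V) : weq (w ++ winv w) [::].
Proof.
elim: w => [|x w IH]; first exact: we_refl.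
rewrite -cat1s winv_cat.
have -> : winv [:: x] = [:: linv x] by [].
apply: we_trans (_ : weq ([:: x] ++ [::] ++ [:: linv x]) _).
  by move: (weq_cat [:: x] [:: linv x] IH); rewrite -!catA.
exact: (we_cancel adj [::] [::] x).
Qed.

Lemma weq_winvl (w : word V) : weq (winv w ++ w) [::].
Proof. by move: (weq_winvr (winv w)); rewrite winvK. Qed.

Lemma wconj_refl w : wconj adj w w.
Proof. by exists [::]; rewrite /= cats0; apply: we_refl. Qed.

Lemma wconj_trans w1 w2 w3 : wconj adj w1 w2 -> wconj adj w2 w3 -> wconj adj w1 w3.
Proof.
case=> g1 H1 [g2 H2]; exists (g2 ++ g1).
apply: we_trans H2; rewrite winv_cat.
move: (weq_cat g2 (winv g2) H1); by rewrite -!catA.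
Qed.

Lemma wconj_sym w1 w2 : wconj adj w1 w2 -> wconj adj w2 w1.
Proof.
case=> g H; exists (winv g); rewrite winvK.
apply: we_trans (_ : weq (winv g ++ (g ++ w1 ++ winv g) ++ g) _).
  by apply: weq_cat; apply: we_sym.
have E : winv g ++ (g ++ w1 ++ winv g) ++ g = (winv g ++ g) ++ w1 ++ (winv g ++ g).
  by rewrite !catA.
rewrite E.
apply: we_trans (_ : weq ([::] ++ w1 ++ (winv g ++ g)) _).
  exact: (weq_cat [::] (w1 ++ (winv g ++ g)) (weq_winvl g)).
move: (weq_cat w1 [::] (weq_winvl g)); by rewrite /= !cats0.
Qed.

Lemma wext_cat f (w1 w2 : word V) : wext f (w1 ++ w2) = wext f w1 ++ wext f w2.
Proof. by rewrite /wext map_cat flatten_cat. Qed.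

Lemma gen_respects (f : letter V -> word V) :
  (forall x, weq (f x ++ f (linv x)) [::]) ->
  (forall x y, adj x.1 y.1 -> weq (f x ++ f y) (f y ++ f x)) -> respects adj f.
Proof.
move=> Hi Hc w1 w2; elim=> {w1 w2} [w|w1 w2 _ IH|w1 w2 w3 _ IH1 _ IH2|p s x|p s x y Hxy].
- exact: we_refl.
- exact: we_sym.
- exact: we_trans IH1 IH2.
- rewrite !wext_cat /wext /= -/(wext f s) catA.
  move: (weq_cat (wext f p) (wext f s) (Hi x)); by rewrite /= !catA.
- rewrite !wext_cat /wext /= -/(wext f s) !catA.
  move: (weq_cat (wext f p) (wext f s) (Hc _ _ Hxy)); by rewrite !catA.
Qed.

Lemma ex_min (P : nat -> Prop) :
  (exists n, P n) -> exists n, P n /\ forall m, P m -> n <= m.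
Proof.
case=> n Pn; elim: n {-2}n (leqnn n) Pn => [|k IH] n Hn Pn.
- by exists n; split => // m _; move: Hn; rewrite leqn0 => /eqP ->.
- case: (classic (exists m, m < n /\ P m)) => [[m [Hm Pm]]|H].
  + apply: (IH m) => //; rewrite -ltnS; exact: leq_trans Hm Hn.
  + exists n; split => // m Pm; rewrite leqNgt; apply/negP => Hm; apply: H; by exists m.
Qed.

Lemma wext_winv_wh (A : {set letter V}) c (w : word V) :
  wext (whmap A c) (winv w) = winv (wext (whmap A c) w).
Proof.
elim: w => [|x w IH] //.
rewrite -cat1s winv_cat wext_cat IH wext_cat winv_cat; congr (_ ++ _).
rewrite /winv /wext /= !cats0 /whmap linvK.
have -> := linv_eq2 x c.
case: ifP => _ //.
by case: (x \in A); case: (linv x \in A); rewrite /= ?linvK.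
Qed.

Lemma wh_inv (A : {set letter V}) c x :
  weq (whmap A c x ++ whmap A c (linv x)) [::].
Proof.
rewrite /whmap linvK.
have -> := linv_eq2 x c.
case: ifP => _; first exact: (we_cancel adj [::] [::] x).
have Hc := we_cancel adj.
have Hc2 : forall p s y, weq (p ++ linv y :: y :: s) (p ++ s).
  by move=> p s y; move: (Hc p s (linv y)); rewrite linvK.
case: (x \in A); case: (linv x \in A) => /=.
- apply: we_trans (Hc2 [::] [::] c).
  apply: we_trans (Hc [:: linv c] [:: c] x).
  exact: (Hc [:: linv c; x] [:: linv x; c] c).
- apply: we_trans (Hc [::] [::] x).
  exact: (Hc [:: x] [:: linv x] c).
- apply: we_trans (Hc2 [::] [::] c).
  exact: (Hc [:: linv c] [:: c] x).
- exact: (Hc [::] [::] x).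
Qed.

Lemma wh_letters (A : {set letter V}) c y z :
  z \in whmap A c y -> (z.1 == c.1) || (z == y).
Proof.
rewrite /whmap; case: ifP => _; first by rewrite inE => ->; rewrite orbT.
rewrite mem_cat inE; case/orP.
  by case: ifP => _; rewrite ?inE // => /eqP ->; rewrite eqxx.
case/orP=> [->|]; first by rewrite orbT.
by case: ifP => _; rewrite ?inE // => /eqP ->; rewrite eqxx.
Qed.

Lemma comm_all x (w : word V) :
  (forall z, z \in w -> adj x.1 z.1) -> weq (x :: w) (w ++ [:: x]).
Proof.
elim: w => [|y w IH] H /=; first exact: we_refl.
apply: we_trans (_ : weq (y :: x :: w) _).
  exact: (we_comm [::] w (H y (mem_head _ _))).
move: (weq_cat [:: y] [::] (IH (fun z hz => H z (mem_behead (s := y :: w) hz)))).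
by rewrite /= !cats0.
Qed.

End Gen.
Arguments linvK {V}.

Section Main.
Variables (V : finType) (adj : rel V).
Hypotheses (adj_sym : symmetric adj) (adj_irr : irreflexive adj).
Variables (B : {set letter V}) (b a : letter V).
Hypotheses (bB : b \in B) (nlbB : linv b \notin B) (naB : a \notin B)
  (nlaB : linv a \notin B).
Hypothesis Fresp : respects adj (whmap B b).
Hypothesis dom : dominates adj a.1 b.1.
Local Notation weq := (wequiv adj).
Local Notation f := (whmap B b).
Local Notation B' := ((B :\ b) :|: [set a]).
Local Notation f' := (whmap B' a).

Definition phi (x : letter V) :=
  if x == b then a else if x == linv b then linv a else x.

Lemma ab : a.1 != b.1.
Proof.
apply/eqP => /same_vertex [E|E].
  by move: bB; rewrite E (negbTE naB).
by move: bB; rewrite E (negbTE nlaB).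
Qed.

Lemma linv_neq (x : letter V) : (linv x == x) = false.
Proof. by case: x => v c; rewrite /linv; apply/eqP => -[]; case: c. Qed.

Lemma phi_nb x : x.1 != b.1 -> phi x = x.
Proof.
move=> hx; rewrite /phi.
have -> : (x == b) = false by apply/eqP => E; rewrite E eqxx in hx.
have -> : (x == linv b) = false by apply/eqP => E; rewrite E eqxx in hx.
by [].
Qed.

Lemma phi_linv x : phi (linv x) = linv (phi x).
Proof.
rewrite /phi (inv_eq linvK) [linv x == linv b](inv_eq linvK) linvK.
case: (eqVneq x b) => [->|hb]; first by rewrite eq_sym linv_neq.
by case: ifP; rewrite ?linvK.
Qed.

Lemma f_nb y : y.1 != b.1 -> f y =
  (if linv y \in B then [:: linv b] else [::]) ++ y :: (if y \in B then [:: b] else [::]).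
Proof.
move=> hy; rewrite /whmap.
have -> : (y == b) = false by apply/eqP => E; rewrite E eqxx in hy.
have -> : (y == linv b) = false by apply/eqP => E; rewrite E eqxx in hy.
by [].
Qed.

Lemma f'_a y : y.1 = a.1 -> f' y = [:: y].
Proof. by move/esym/same_vertex => [->|->]; rewrite /whmap eqxx ?orbT. Qed.

Lemma b_facts y : y.1 = b.1 -> [/\ (y == a) = false, (y == linv a) = false
  & (y \in B') = false].
Proof.
move=> hy; split.
- by apply/eqP => E; move: ab; rewrite -E hy eqxx.
- by apply/eqP => E; move: ab; rewrite -[a]linvK -E /= hy eqxx.
- rewrite !inE; case/esym/same_vertex: hy => ->.
  + rewrite eqxx /=; apply/eqP => E; move: ab; rewrite -E eqxx //.
  + rewrite (negbTE nlbB) andbF /=; apply/eqP => E; move: ab; rewrite -E eqxx //.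
Qed.

Lemma f'_b x : x.1 = b.1 -> f' x = [:: x].
Proof.
move=> hx; have [h1 h2 h3] := b_facts hx.
have [_ _ h4] := b_facts (y := linv x) hx.
by rewrite /whmap h1 h2 h3 h4.
Qed.

Lemma f'_eq x : x.1 != b.1 -> f' x = map phi (f x).
Proof.
move=> hx; rewrite (f_nb hx).
case: (eqVneq x.1 a.1) => hxa.
  rewrite (f'_a hxa).
  case/esym/same_vertex: hxa => ->; rewrite ?linvK (negbTE naB) (negbTE nlaB) /=;
  by rewrite phi_nb // ?ab.
have hla : (linv x).1 != a.1 by [].
have hb : x != b by apply/eqP => E; rewrite E eqxx in hx.
have hlb : linv x != b by apply/eqP => E; rewrite -E eqxx in hx.
have ha : x != a by apply/eqP => E; rewrite E eqxx in hxa.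
have hla' : linv x != a by apply/eqP => E; rewrite -E eqxx in hxa.
have hlx : x != linv a by apply/eqP => E; rewrite E eqxx in hxa.
rewrite /whmap (negbTE ha) (negbTE hlx) /= !inE hb hlb (negbTE ha) (negbTE hla') /=
  !orbF map_cat /= (phi_nb hx).
have p1 : phi (linv b) = linv a by rewrite /phi linv_neq eqxx.
have p2 : phi b = a by rewrite /phi eqxx.
by case: (linv x \in B); case: (x \in B); rewrite /= ?p1 ?p2.
Qed.

Lemma same_comm (x y : letter V) : x.1 = y.1 -> weq [:: x; y] [:: y; x].
Proof.
case/same_vertex => ->; first exact: we_refl.
apply: we_trans (_ : weq [::] _); first exact: (we_cancel adj [::] [::] x).
apply: we_sym; move: (we_cancel adj [::] [::] (linv x)); by rewrite linvK.
Qed.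

Lemma phi_comm_b x y : adj x.1 y.1 -> x.1 = b.1 -> weq [:: phi x; phi y] [:: phi y; phi x].
Proof.
move=> hxy hxb.
have hyb : y.1 != b.1 by apply/eqP => E; move: hxy; rewrite hxb E adj_irr.
rewrite (phi_nb hyb).
have hpx : (phi x).1 = a.1.
  by case/esym/same_vertex: hxb => ->; rewrite /phi ?eqxx // linv_neq.
have := dom (z := y.1); rewrite -hxb => /(_ hxy) /orP [h|/eqP h].
  by apply: (we_comm [::] [::]); rewrite hpx.
by apply: same_comm; rewrite hpx h.
Qed.

Lemma phi_comm x y : adj x.1 y.1 -> weq [:: phi x; phi y] [:: phi y; phi x].
Proof.
move=> hxy.
case: (eqVneq x.1 b.1) => hx; first exact: phi_comm_b.
case: (eqVneq y.1 b.1) => hy.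
  by apply: we_sym; apply: phi_comm_b => //; rewrite adj_sym.
by rewrite (phi_nb hx) (phi_nb hy); apply: (we_comm [::] [::]).
Qed.

Lemma phi_resp : respects adj (fun x => [:: phi x]).
Proof.
apply: gen_respects => [x|x y hxy] /=; last exact: phi_comm.
rewrite phi_linv; exact: (we_cancel adj [::] [::]).
Qed.

Lemma rl_wext w : replace_letter b a w = wext (fun x => [:: phi x]) w.
Proof. by elim: w => //= x w ->. Qed.

Lemma rl_winv w : wext (fun x => [:: phi x]) (winv w) = winv (wext (fun x => [:: phi x]) w).
Proof.
rewrite -!rl_wext /replace_letter /winv map_rev -!map_comp; congr rev.
by apply: eq_map => x /=; rewrite -phi_linv.
Qed.

Section Ev.
Hypothesis nadj : ~~ adj a.1 b.1.
Definition sw01 (n : nat) := if n == 0 then 1 else if n == 1 then 0 else n.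
Definition sw12 (n : nat) := if n == 1 then 2 else if n == 2 then 1 else n.
Definition act (x : letter V) n :=
  if x.1 == a.1 then sw01 n else if x.1 == b.1 then sw12 n else n.
Definition ev (w : word V) n := foldr act n w.

Lemma ev_cat w1 w2 n : ev (w1 ++ w2) n = ev w1 (ev w2 n).
Proof. by rewrite /ev foldr_cat. Qed.

Lemma act_inv x n : act x (act (linv x) n) = n.
Proof.
rewrite /act /=; case: (x.1 == a.1); first by rewrite /sw01; case: n => [|[|[|n]]].
by case: (x.1 == b.1) => //; rewrite /sw12; case: n => [|[|[|n]]].
Qed.

Lemma act_comm x y n : adj x.1 y.1 -> act x (act y n) = act y (act x n).
Proof.
move=> hxy; rewrite /act.
have nba : ~~ adj b.1 a.1 by rewrite adj_sym.
case: (eqVneq x.1 a.1) => hxa; case: (eqVneq y.1 a.1) => hya;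
case: (eqVneq x.1 b.1) => hxb; case: (eqVneq y.1 b.1) => hyb => //.
all: try by move: ab; rewrite -?hxa -?hya ?hxb ?hyb eqxx.
all: try by move: hxy; rewrite ?hxa ?hya ?hxb ?hyb (negbTE nadj).
all: try by move: hxy; rewrite ?hxa ?hya ?hxb ?hyb (negbTE nba).
Qed.

Lemma ev_resp w1 w2 : weq w1 w2 -> forall n, ev w1 n = ev w2 n.
Proof.
elim=> {w1 w2} [w|w1 w2 _ IH|w1 w2 w3 _ IH1 _ IH2|p s x|p s x y Hxy] n.
- by [].
- by rewrite IH.
- by rewrite IH1 IH2.
- by rewrite !ev_cat /= act_inv.
- by rewrite !ev_cat /= act_comm.
Qed.

Lemma delta_eps y : adj b.1 y.1 -> y.1 != a.1 -> (linv y \in B) = (y \in B).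
Proof.
move=> hby hya.
have hyb : y.1 != b.1 by apply/eqP => E; move: hby; rewrite E adj_irr.
have hay : adj a.1 y.1 by move: (dom hby); rewrite (negbTE hya) orbF.
have := Fresp (@we_comm _ adj [::] [::] a y hay).
move/ev_resp => /(_ 0).
rewrite /wext /= !cats0 (f_nb hyb) (f_nb ab) (negbTE naB) (negbTE nlaB) /=.
have e1 : act a = sw01 by rewrite /act eqxx.
have e2 : act (linv b) = sw12 by rewrite /act /= eq_sym (negbTE ab) eqxx.
have e3 : act b = sw12 by rewrite /act /= eq_sym (negbTE ab) eqxx.
have e4 : act y = id by rewrite /act (negbTE hya) (negbTE hyb).
by case: (linv y \in B); case: (y \in B); rewrite /ev /= ?e1 ?e2 ?e3 ?e4.
Qed.
End Ev.

Lemma f'_comm_b x y : adj x.1 y.1 -> x.1 = b.1 -> weq (f' x ++ f' y) (f' y ++ f' x).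
Proof.
move=> hxy hxb.
have hyb : y.1 != b.1 by apply/eqP => E; move: hxy; rewrite hxb E adj_irr.
rewrite (f'_b hxb) /=.
case: (boolP (adj a.1 b.1)) => hab.
  apply: comm_all => z /wh_letters /orP [/eqP->|/eqP->] //.
  by rewrite hxb adj_sym.
case: (eqVneq y.1 a.1) => hya.
  by rewrite (f'_a hya); apply: (we_comm [::] [::]).
have hby : adj b.1 y.1 by rewrite -hxb.
have hay : adj a.1 y.1 by move: (dom hby); rewrite (negbTE hya) orbF.
have de := delta_eps hab hby hya.
have Hy : weq (f' y) [:: y].
  rewrite f'_eq // f_nb // de.
  have p1 : phi (linv b) = linv a by rewrite /phi linv_neq eqxx.
  have p2 : phi b = a by rewrite /phi eqxx.
  case: (y \in B); rewrite /= ?p1 ?p2 (phi_nb hyb); last exact: we_refl.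
  apply: we_trans (_ : weq [:: y; linv a; a] _).
    exact: (@we_comm _ adj [::] [:: a] (linv a) y hay).
  by move: (we_cancel adj [:: y] [::] (linv a)); rewrite linvK.
apply: we_trans (_ : weq [:: x; y] _).
  by move: (weq_cat [:: x] [::] Hy); rewrite /= !cats0.
apply: we_trans (_ : weq [:: y; x] _); first exact: (we_comm [::] [::]).
by move: (weq_cat [::] [:: x] (we_sym Hy)).
Qed.

Lemma f'_resp : respects adj f'.
Proof.
apply: gen_respects => [x|x y hxy]; first exact: wh_inv.
case: (eqVneq x.1 b.1) => hx; first exact: f'_comm_b.
case: (eqVneq y.1 b.1) => hy.
  by apply: we_sym; apply: f'_comm_b => //; rewrite adj_sym.
rewrite !f'_eq // -!map_cat.
change (weq (replace_letter b a (f x ++ f y)) (replace_letter b a (f y ++ f x))).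
rewrite !rl_wext; apply: phi_resp.
move: (Fresp (@we_comm _ adj [::] [::] x y hxy)); by rewrite /wext /= !cats0.
Qed.

Lemma key w : ~~ occurs b.1 w -> wext f' w = replace_letter b a (wext f w).
Proof.
move=> hw; rewrite /replace_letter /wext map_flatten -map_comp; congr flatten.
apply/eq_in_map => x hx /=; apply: f'_eq.
by apply: contraNneq hw => <-; apply: map_f.
Qed.

End Main.

Lemma wconj_map (V : finType) (adj : rel V) (g : letter V -> word V) w1 w2 :
  respects adj g -> (forall w, wext g (winv w) = winv (wext g w)) ->
  wconj adj w1 w2 -> wconj adj (wext g w1) (wext g w2).
Proof.
move=> hr hi [h H]; exists (wext g h).
by rewrite -hi -!wext_cat; apply: hr.
Qed.

Theorem mainTheorem17 (V : finType) (adj : rel V)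
  (adj_sym : symmetric adj) (adj_irr : irreflexive adj)
  (B : {set letter V}) (b a : letter V) :
  whitehead2 adj B b ->
  dominates adj a.1 b.1 ->
  a \notin B -> linv a \notin B ->
  (forall u v : word V,
     ~ supp_el adj u b.1 ->
     greduced adj v ->
     wequiv adj v (wext (whmap B b) u) ->
     wequiv adj (replace_letter b a v)
                (wext (whmap ((B :\ b) :|: [set a]) a) u))
  /\
  (forall u v : word V,
     ~ supp_cl adj u b.1 ->
     cgreduced adj v ->
     wconj adj v (wext (whmap B b) u) ->
     wconj adj (replace_letter b a v)
               (wext (whmap ((B :\ b) :|: [set a]) a) u)).
Proof.
case=> bB nlbB [Fresp _] dom naB nlaB.
have F'resp := f'_resp adj_sym adj_irr bB nlbB naB nlaB Fresp dom.
have Key := key bB naB nlaB.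
have Presp := phi_resp adj_sym adj_irr dom.
split.
- move=> u v nsupp _ Hv.
  have [n [[w0 [Hw0 Hs]] Hmin]] :=
    @ex_min (fun n => exists w, wequiv adj w u /\ size w = n) (ex_intro _ (size u) (ex_intro _ u (conj (we_refl adj u) erefl))).
  have red : greduced adj w0.
    move=> w' Hw'; rewrite Hs; apply: Hmin; exists w'; split => //.
    exact: we_trans Hw' Hw0.
  have nocc : ~~ occurs b.1 w0.
    by apply/negP => H; apply: nsupp; exists w0; split.
  apply: (@we_trans _ adj _ (wext (whmap ((B :\ b) :|: [set a]) a) w0)); last exact: F'resp.
  rewrite Key // !rl_wext; apply: Presp.
  apply: we_trans Hv _; apply: Fresp; exact: we_sym.
- move=> u v nsupp _ Hv.
  have [n [[w0 [Hw0 Hs]] Hmin]] :=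
    @ex_min (fun n => exists w, wconj adj w u /\ size w = n) (ex_intro _ (size u) (ex_intro _ u (conj (wconj_refl adj u) erefl))).
  have red : cgreduced adj w0.
    move=> w' Hw'; rewrite Hs; apply: Hmin; exists w'; split => //.
    exact: wconj_trans Hw' Hw0.
  have nocc : ~~ occurs b.1 w0.
    by apply/negP => H; apply: nsupp; exists w0; split.
  apply: (wconj_trans (w2 := wext (whmap ((B :\ b) :|: [set a]) a) w0));
    last by apply: wconj_map => //; apply: wext_winv_wh.
  rewrite Key // !rl_wext; apply: wconj_map => //; first exact: rl_winv.
  apply: wconj_trans Hv _; apply: wconj_sym; apply: wconj_map => //.
  exact: wext_winv_wh.
Qed.
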